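(* Assume $N\ge1$ relays at (fixed) source–relay distances $d_1,\dots,d_N\in[0,R_{\mathcal D}]$, $\alpha=2$, and the far-destination approximation (every relay–destination distance equals $d$). For a relay at source distance $r$ define its outage probability (averaged over fading) $$O_r(P)=\mathcal{P}\big(x_0+\eta y(x-\epsilon)<\epsilon,\ x>\epsilon\big)+\mathcal{P}\big(x_0<\epsilon,\ x<\epsilon\big),\quad x=\frac{|h|^2}{1+r^2},\ y=\frac{|g|^2}{1+d^2}.$$ Then for all sufficiently large $P$, selecting the relay closest to the source minimizes the outage probability: $O_{\min_j d_j}(P)\le O_{d_i}(P)$ for every $i\in\{1,\dots,N\}$.
   Context: $x_0=|h_d|^2/(1+d^2)$, where $d>0$ is the source–destination distance; $h_d,h,g$ are independent $\mathcal{CN}(0,1)$ fading coefficients. $\tau=2^{2R}-1$ for target rate $R>0$, $\epsilon=\tau/P$ with transmit power $P$, energy harvesting efficiency $\eta\in(0,1]$. A relay decodes iff $x>\epsilon$ and forwards with harvested power $\eta(Px-\tau)$; outage when the combined destination SNR $P(x_0+\eta y(x-\epsilon))$ is below $\tau$ (if the relay cannot decode, outage iff $x_0<\epsilon$). *)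

(* Defs.v *)
From Stdlib Require Import Reals Lra Classical ClassicalEpsilon.
Open Scope R_scope.

Definition improper_int_to (f : R -> R) (a l : R) : Prop :=
  (forall b, a <= b -> exists pr : Riemann_integrable f a b, True) /\
  (forall e, 0 < e -> exists M, forall b (pr : Riemann_integrable f a b),
      M <= b -> Rabs (RiemannInt pr - l) < e).

(* The value of the improper integral \int_0^{+oo} f (0 if it does not exist;
   the limit is unique when it exists). *)
Definition Int0inf (f : R -> R) : R :=
  match excluded_middle_informative (exists l, improper_int_to f 0 l) with
  | left H => proj1_sig (constructive_indefinite_description _ H)
  | right _ => 0
  end.

(* |h|^2 for h ~ CN(0,1) is Exp(1), with density exp(-t) on [0,+oo).
   Expectation of a function of three independent such variables
   (s = |h_d|^2, t = |h|^2, u = |g|^2). *)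
Definition Exp3 (F : R -> R -> R -> R) : R :=
  Int0inf (fun s => Int0inf (fun t => Int0inf (fun u =>
    F s t u * exp (- s) * exp (- t) * exp (- u)))).

Definition ind_lt (a b : R) : R := if Rlt_dec a b then 1 else 0.

Definition tau (Rt : R) : R := Rpower 2 (2 * Rt) - 1.
Definition eps (Rt P : R) : R := tau Rt / P.

Definition outage (d eta Rt P r : R) : R :=
  let e := eps Rt P in
  Exp3 (fun s t u =>
    let x0 := s / (1 + d ^ 2) in
    let x := t / (1 + r ^ 2) in
    let y := u / (1 + d ^ 2) in
    ind_lt (x0 + eta * y * (x - e)) e * ind_lt e x)
  + Exp3 (fun s t u =>
    let x0 := s / (1 + d ^ 2) in
    let x := t / (1 + r ^ 2) in
    ind_lt x0 e * ind_lt x e).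

(* Main.v *)
Require Import Defs.
From Stdlib Require Import Reals Lra Psatz Classical ClassicalEpsilon.
From Coquelicot Require Import Coquelicot.
Open Scope R_scope.

Lemma UA f a b : a <= b ->
  (forall eps, 0 < eps -> exists g, (exists pr : Riemann_integrable g a b, True) /\
      forall x, a <= x <= b -> Rabs (f x - g x) <= eps) ->
  Riemann_integrable f a b.
Proof.
  intros Hab H eps.
  set (dl := eps / (2 * (b - a + 1))).
  assert (Heps := cond_pos eps).
  assert (Hd : 0 < dl) by (unfold dl; apply Rdiv_lt_0_compat; lra).
  assert (E1 : dl * (2 * (b - a + 1)) = eps) by (unfold dl; field; lra).
  destruct (constructive_indefinite_description _ (H dl Hd)) as [g [Hg Hfg]].
  destruct (constructive_indefinite_description _ Hg) as [pr _].
  assert (He2 : 0 < eps / 2) by lra.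
  destruct (pr (mkposreal _ He2)) as [phi [psi [H1 H2]]].
  exists phi. exists (mkStepFun (StepFun_P28 1 psi (mkStepFun (StepFun_P4 a b dl)))).
  split.
  - intros t Ht. simpl. unfold fct_cte.
    rewrite Rmin_left, Rmax_right in Ht by lra.
    assert (Ht' : Rmin a b <= t <= Rmax a b) by (rewrite Rmin_left, Rmax_right by lra; exact Ht).
    specialize (H1 t Ht'). specialize (Hfg t Ht).
    replace (f t - phi t) with ((f t - g t) + (g t - phi t)) by ring.
    eapply Rle_trans; [apply Rabs_triang|]. lra.
  - rewrite StepFun_P30, StepFun_P18. simpl in H2.
    eapply Rle_lt_trans; [apply Rabs_triang|].
    rewrite (Rabs_right (1 * (dl * (b - a)))) by nra. nra.
Qed.

Lemma lvl_int (f : R -> R) a b y : a <= b ->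
  (forall x z, a <= x -> x <= z -> z <= b -> f z <= f x) ->
  Riemann_integrable (fun x => if Rle_dec y (f x) then 1 else 0) a b.
Proof.
  intros Hab Hm.
  apply ex_RInt_Reals_0.
  set (E := fun x => a <= x <= b /\ y <= f x).
  destruct (classic (exists x, E x)) as [He|He].
  - assert (Hb : bound E) by (exists b; intros x [[_ Hx] _]; exact Hx).
    destruct (completeness E Hb He) as [z [Hub Hlub]].
    assert (az : a <= z) by (destruct He as [x Hx]; specialize (Hub x Hx); destruct Hx; lra).
    assert (zb : z <= b) by (apply Hlub; intros x [[_ Hx] _]; exact Hx).
    apply ex_RInt_Chasles with z.
    + apply (ex_RInt_ext (fun _ => 1)).
      * rewrite Rmin_left, Rmax_right by lra. intros x Hx.
        destruct (Rle_dec y (f x)) as [_|Hn]; auto. exfalso.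
        destruct (classic (exists x', E x' /\ x < x')) as [[x' [[Hx'1 Hx'2] Hxx']]|Hno].
        -- apply Hn. eapply Rle_trans; [exact Hx'2|]. apply Hm; lra.
        -- assert (z <= x).
           { apply Hlub. intros x' Hx'. destruct (Rle_dec x' x); auto.
             exfalso; apply Hno; exists x'; split; auto; lra. }
           lra.
      * apply ex_RInt_const.
    + apply (ex_RInt_ext (fun _ => 0)).
      * rewrite Rmin_left, Rmax_right by lra. intros x Hx.
        destruct (Rle_dec y (f x)) as [Hy|]; auto. exfalso.
        assert (x <= z) by (apply Hub; split; [lra|exact Hy]). lra.
      * apply ex_RInt_const.
  - apply (ex_RInt_ext (fun _ => 0)).
    + rewrite Rmin_left, Rmax_right by lra. intros x Hx.
      destruct (Rle_dec y (f x)); auto; exfalso; apply He; exists x; split; [lra|auto].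
    + apply ex_RInt_const.
Qed.

Fixpoint stair (f : R -> R) (c d : R) (n : nat) (x : R) : R :=
  match n with
  | O => 0
  | S m => stair f c d m x + d * (if Rle_dec (c + INR (S m) * d) (f x) then 1 else 0)
  end.

Lemma stair_int f c d a b n : a <= b ->
  (forall x z, a <= x -> x <= z -> z <= b -> f z <= f x) ->
  Riemann_integrable (stair f c d n) a b.
Proof.
  intros Hab Hm. induction n as [|m IH].
  - apply (Riemann_integrable_ext (fct_cte 0)).
    + intros; reflexivity.
    + apply RiemannInt_P14.
  - exact (RiemannInt_P10 d IH (lvl_int f a b _ Hab Hm)).
Qed.

Lemma stair_prop f c d x : 0 < d -> c <= f x -> forall n,
  stair f c d n x <= f x - c /\
  (c + INR n * d <= f x -> stair f c d n x = INR n * d) /\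
  (f x < c + INR n * d -> f x - c - stair f c d n x < d).
Proof.
  intros Hd Hc n. induction n as [|m [IH1 [IH2 IH3]]].
  - simpl. split; [lra|]. split; intros; lra.
  - cbn [stair]. rewrite S_INR.
    set (k := INR m * d) in *.
    replace ((INR m + 1) * d) with (k + d) by (unfold k; ring).
    destruct (Rle_dec (c + (k + d)) (f x)) as [Hl|Hl].
    + assert (stair f c d m x = k) by (apply IH2; lra).
      split; [lra|]. split; intros; lra.
    + destruct (Rle_dec (c + k) (f x)) as [Hk|Hk].
      * assert (stair f c d m x = k) by (apply IH2; lra).
        split; [lra|]. split; intros; lra.
      * assert (f x - c - stair f c d m x < d) by (apply IH3; lra).
        split; [lra|]. split; intros; lra.
Qed.

Lemma mono_int f a b : a <= b ->
  (forall x z, a <= x -> x <= z -> z <= b -> f z <= f x) ->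
  Riemann_integrable f a b.
Proof.
  intros Hab Hm. apply UA; auto. intros eps Heps.
  destruct (INR_unbounded ((f a - f b) / eps)) as [n Hn].
  exists (fun x => f b + stair f (f b) eps n x). split.
  - assert (pr : Riemann_integrable (fun x => f b + stair f (f b) eps n x) a b).
    { apply (@Riemann_integrable_ext (fun x => fct_cte (f b) x + 1 * stair f (f b) eps n x)).
      - intros; unfold fct_cte; ring.
      - exact (RiemannInt_P10 1 (RiemannInt_P14 a b (f b)) (stair_int f (f b) eps a b n Hab Hm)). }
    exists pr. exact I.
  - intros x Hx.
    assert (Hfb : f b <= f x) by (apply Hm; lra).
    assert (Hfa : f x <= f a) by (apply Hm; lra).
    destruct (stair_prop f (f b) eps x Heps Hfb n) as [P1 [P2 P3]].
    assert (INR n * eps > f a - f b).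
    { apply Rmult_gt_compat_r with (r := eps) in Hn; auto.
      unfold Rdiv in Hn. rewrite Rmult_assoc, Rinv_l, Rmult_1_r in Hn by lra. lra. }
    specialize (P3 ltac:(lra)).
    rewrite Rabs_right by lra. lra.
Qed.

Lemma Mp f a b p B : a <= b ->
  (forall x y, a <= x -> x <= y -> y <= b -> x <> p -> f y <= f x) ->
  (forall x, a <= x <= b -> f x <= B) ->
  exists pr : Riemann_integrable f a b, True.
Proof.
  intros Hab Hm HB.
  destruct (Rle_dec a p) as [Hap|Hap]; [destruct (Rlt_dec p b) as [Hpb|Hpb]|].
  - assert (pr1 : Riemann_integrable f a p).
    { apply mono_int; auto. intros x z Hx Hxz Hz.
      destruct (Req_dec x z) as [->|Hne]; [lra|]. apply Hm; lra. }
    set (g := fun x => if Req_EM_T x p then B else f x).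
    assert (pr2 : Riemann_integrable g p b).
    { apply mono_int; [lra|]. intros x z Hx Hxz Hz. unfold g.
      destruct (Req_dec x z) as [<-|Hne]; [lra|].
      destruct (Req_EM_T z p); [lra|].
      destruct (Req_EM_T x p). apply HB; lra. apply Hm; lra. }
    assert (pr3 : Riemann_integrable f p b).
    { apply ex_RInt_Reals_0. apply ex_RInt_Reals_1 in pr2.
      apply (ex_RInt_ext g); auto. rewrite Rmin_left, Rmax_right by lra.
      intros x Hx. unfold g. destruct (Req_EM_T x p); auto; lra. }
    exists (RiemannInt_P21 Hap (Rlt_le _ _ Hpb) pr1 pr3). exact I.
  - exists (mono_int f a b Hab ltac:(intros x z Hx Hxz Hz;
      destruct (Req_dec x z) as [->|Hne]; [lra|]; apply Hm; lra)). exact I.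
  - exists (mono_int f a b Hab ltac:(intros x z Hx Hxz Hz;
      destruct (Req_dec x z) as [->|Hne]; [lra|]; apply Hm; lra)). exact I.
Qed.

Lemma improper_unique f l1 l2 : improper_int_to f 0 l1 -> improper_int_to f 0 l2 -> l1 = l2.
Proof.
  intros [E1 H1] [E2 H2].
  destruct (Req_dec l1 l2) as [|Hne]; auto. exfalso.
  assert (He : 0 < Rabs (l1 - l2) / 2) by (assert (0 < Rabs (l1 - l2)) by (apply Rabs_pos_lt; lra); lra).
  destruct (H1 _ He) as [M1 HM1]. destruct (H2 _ He) as [M2 HM2].
  set (b := Rmax (Rmax M1 M2) 0).
  assert (b0 : 0 <= b) by apply Rmax_r.
  assert (bM1 : M1 <= b) by (unfold b; eapply Rle_trans; [apply Rmax_l|apply Rmax_l]).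
  assert (bM2 : M2 <= b) by (unfold b; eapply Rle_trans; [apply Rmax_r|apply Rmax_l]).
  destruct (E1 b b0) as [pr _].
  specialize (HM1 b pr bM1). specialize (HM2 b pr bM2).
  revert HM1 HM2. generalize (RiemannInt pr). intros I.
  unfold Rabs; repeat destruct Rcase_abs; lra.
Qed.

Lemma Int0inf_eq f l : improper_int_to f 0 l -> Int0inf f = l.
Proof.
  intros H. unfold Int0inf.
  destruct (excluded_middle_informative _) as [He|He].
  - destruct (constructive_indefinite_description _ He) as [l' Hl']. simpl.
    eapply improper_unique; eauto.
  - exfalso; apply He; exists l; auto.
Qed.

Lemma RInt_exp_bound M b : 0 <= b -> is_RInt (fun x => M * exp (- x)) 0 b (M - M * exp (- b)).
Proof.
  intros Hb.
  assert (H := is_RInt_derive (fun x => - M * exp (- x)) (fun x => M * exp (- x)) 0 b).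
  replace (M - M * exp (- b)) with (minus (- M * exp (- b)) (- M * exp (- 0))).
  2:{ unfold minus, plus, opp; simpl. rewrite Ropp_0, exp_0. ring. }
  apply H.
  - intros x _. auto_derive; auto. ring.
  - intros x _. apply (ex_derive_continuous (fun x => M * exp (- x))). auto_derive; auto.
Qed.

Lemma L1 f M : 0 <= M ->
  (forall v, 0 <= v -> 0 <= f v <= M * exp (- v)) ->
  (forall b, 0 <= b -> exists pr : Riemann_integrable f 0 b, True) ->
  exists l, improper_int_to f 0 l /\ 0 <= l <= M.
Proof.
  intros HM Hf Hi.
  assert (Hex : forall b, 0 <= b -> ex_RInt f 0 b).
  { intros b Hb. destruct (Hi b Hb) as [pr _]. apply ex_RInt_Reals_1; exact pr. }
  assert (Hmono : forall b1 b2, 0 <= b1 <= b2 -> RInt f 0 b1 <= RInt f 0 b2).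
  { intros b1 b2 Hb. rewrite <- (RInt_Chasles f 0 b1 b2).
    - assert (0 <= RInt f b1 b2); [|simpl; unfold plus; simpl; lra].
      apply RInt_ge_0; [lra| |].
      + apply (ex_RInt_Chasles_2 f 0); [lra|]. apply Hex; lra.
      + intros x Hx. apply Hf; lra.
    - apply Hex; lra.
    - apply (ex_RInt_Chasles_2 f 0); [lra|]. apply Hex; lra. }
  assert (Hbd : forall b, 0 <= b -> 0 <= RInt f 0 b <= M).
  { intros b Hb. split.
    - apply RInt_ge_0; auto. intros x Hx; apply Hf; lra.
    - apply Rle_trans with (RInt (fun x => M * exp (- x)) 0 b).
      + apply RInt_le; auto. eexists; apply RInt_exp_bound; auto.
        intros x Hx; apply Hf; lra.
      + rewrite (is_RInt_unique _ _ _ _ (RInt_exp_bound M b Hb)).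
        assert (0 < exp (- b)) by apply exp_pos. nra. }
  set (E := fun y => exists b, 0 <= b /\ y = RInt f 0 b).
  assert (HE : exists y, E y) by (exists (RInt f 0 0); exists 0; split; [lra|auto]).
  assert (HB : bound E) by (exists M; intros y [b [Hb ->]]; apply Hbd; auto).
  destruct (completeness E HB HE) as [l [Hub Hlub]].
  exists l. split; [split|].
  - exact Hi.
  - intros eps Heps.
    destruct (classic (exists b, 0 <= b /\ l - eps < RInt f 0 b)) as [[b0 [Hb0 Hl]]|Hno].
    + exists b0. intros b pr Hb. rewrite <- (RInt_Reals f 0 b pr).
      assert (RInt f 0 b <= l) by (apply Hub; exists b; split; auto; lra).
      assert (RInt f 0 b0 <= RInt f 0 b) by (apply Hmono; lra).
      unfold Rabs; destruct Rcase_abs; lra.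
    + exfalso. assert (l <= l - eps); [|lra]. apply Hlub.
      intros y [b [Hb ->]]. destruct (Rle_dec (RInt f 0 b) (l - eps)); auto.
      exfalso; apply Hno; exists b; split; auto; lra.
  - split.
    + apply Rle_trans with (RInt f 0 0); [apply Hbd; lra|].
      apply Hub. exists 0; split; [lra|]. reflexivity.
    + apply Hlub. intros y [b [Hb ->]]. apply Hbd; auto.
Qed.

Lemma L3 f g l1 l2 p : improper_int_to f 0 l1 -> improper_int_to g 0 l2 ->
  (forall v, 0 < v -> v <> p -> f v <= g v) -> l1 <= l2.
Proof.
  intros [E1 H1] [E2 H2] Hle.
  destruct (Rle_dec l1 l2) as [|Hn]; auto. exfalso.
  assert (He : 0 < (l1 - l2) / 2) by lra.
  destruct (H1 _ He) as [M1 HM1]. destruct (H2 _ He) as [M2 HM2].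
  set (b := Rmax (Rmax M1 M2) (Rabs p + 1)).
  assert (bp : Rabs p + 1 <= b) by apply Rmax_r.
  assert (Hp := Rle_abs p). assert (Hp0 := Rabs_pos p).
  assert (b0 : 0 <= b) by lra.
  assert (bM1 : M1 <= b) by (unfold b; eapply Rle_trans; [apply Rmax_l|apply Rmax_l]).
  assert (bM2 : M2 <= b) by (unfold b; eapply Rle_trans; [apply Rmax_r|apply Rmax_l]).
  destruct (E1 b b0) as [prf _]. destruct (E2 b b0) as [prg _].
  specialize (HM1 b prf bM1). specialize (HM2 b prg bM2).
  assert (RiemannInt prf <= RiemannInt prg).
  { destruct (Rlt_dec 0 p) as [Hp1|Hp1].
    - assert (Hpb : 0 <= p <= b) by lra.
      rewrite <- (RiemannInt_P25 (RiemannInt_P22 prf Hpb) (RiemannInt_P23 prf Hpb) prf) by lra.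
      rewrite <- (RiemannInt_P25 (RiemannInt_P22 prg Hpb) (RiemannInt_P23 prg Hpb) prg) by lra.
      apply Rplus_le_compat; apply RiemannInt_P19; try lra; intros x Hx; apply Hle; lra.
    - apply RiemannInt_P19; auto. intros x Hx; apply Hle; lra. }
  revert HM1 HM2 H. generalize (RiemannInt prf) (RiemannInt prg). intros I J.
  unfold Rabs; repeat destruct Rcase_abs; lra.
Qed.

Lemma Lin f g h k l1 l2 : improper_int_to f 0 l1 -> improper_int_to g 0 l2 ->
  (forall v, 0 <= v -> h v = f v + k * g v) -> improper_int_to h 0 (l1 + k * l2).
Proof.
  intros [E1 H1] [E2 H2] Hh.
  assert (Ih : forall b, 0 <= b -> forall (prf : Riemann_integrable f 0 b)
     (prg : Riemann_integrable g 0 b) (pr : Riemann_integrable h 0 b),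
     RiemannInt pr = RiemannInt prf + k * RiemannInt prg).
  { intros b Hb prf prg pr.
    rewrite <- (RiemannInt_P13 prf prg (RiemannInt_P10 k prf prg)).
    apply RiemannInt_P18; auto. intros x Hx. rewrite Hh; [reflexivity|lra]. }
  split.
  - intros b Hb. destruct (E1 b Hb) as [prf _]. destruct (E2 b Hb) as [prg _].
    assert (pr : Riemann_integrable h 0 b).
    { apply (@Riemann_integrable_ext (fun x => f x + k * g x) h).
      - intros x Hx; rewrite Rmin_left, Rmax_right in Hx by lra; symmetry; apply Hh; lra.
      - exact (RiemannInt_P10 k prf prg). }
    exists pr. exact I.
  - intros eps Heps.
    assert (Hk := Rabs_pos k).
    assert (He1 : 0 < eps / 2) by lra.
    assert (He2 : 0 < eps / (2 * (Rabs k + 1))) by (apply Rdiv_lt_0_compat; lra).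
    assert (E3 : eps / (2 * (Rabs k + 1)) * (Rabs k + 1) = eps / 2) by (field; lra).
    destruct (H1 _ He1) as [M1 HM1]. destruct (H2 _ He2) as [M2 HM2].
    exists (Rmax (Rmax M1 M2) 0). intros b pr Hb.
    assert (b0 : 0 <= b) by (eapply Rle_trans; [apply Rmax_r|exact Hb]).
    assert (bM1 : M1 <= b) by (eapply Rle_trans; [eapply Rle_trans; [apply Rmax_l|apply Rmax_l]|exact Hb]).
    assert (bM2 : M2 <= b) by (eapply Rle_trans; [eapply Rle_trans; [apply Rmax_r|apply Rmax_l]|exact Hb]).
    destruct (E1 b b0) as [prf _]. destruct (E2 b b0) as [prg _].
    rewrite (Ih b b0 prf prg pr).
    specialize (HM1 b prf bM1). specialize (HM2 b prg bM2).
    set (A := RiemannInt prf - l1) in *. set (B := RiemannInt prg - l2) in *.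
    replace (RiemannInt prf + k * RiemannInt prg - (l1 + k * l2)) with (A + k * B) by (unfold A, B; ring).
    eapply Rle_lt_trans; [apply Rabs_triang|]. rewrite Rabs_mult.
    assert (Rabs k * Rabs B <= Rabs k * (eps / (2 * (Rabs k + 1)))) by (apply Rmult_le_compat_l; lra).
    nra.
Qed.

Definition w3 (F : R -> R -> R -> R) s t u := F s t u * exp (- s) * exp (- t) * exp (- u).
Definition Tf F s t := Int0inf (fun u => w3 F s t u).
Definition Sf F s := Int0inf (fun t => Tf F s t).

Record good (F : R -> R -> R -> R) (p : R) : Prop := {
  g0 : forall s t u, 0 <= F s t u <= 1;
  gu : forall s t u1 u2, u1 <= u2 -> F s t u2 <= F s t u1;
  gs : forall s1 s2 t u, s1 <= s2 -> 0 <= u -> F s2 t u <= F s1 t u;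
  gt : forall s t1 t2 u, t1 <= t2 -> t1 <> p -> 0 <= u -> F s t2 u <= F s t1 u }.

Lemma exp_anti x y : x <= y -> exp (- y) <= exp (- x).
Proof. intros H. destruct (Req_dec x y) as [->|]; [lra|]. left; apply exp_increasing; lra. Qed.

Lemma good_T F p : good F p -> forall s t,
  improper_int_to (w3 F s t) 0 (Tf F s t) /\ 0 <= Tf F s t <= exp (- s) * exp (- t).
Proof.
  intros G s t.
  assert (Hs := exp_pos (- s)). assert (Ht := exp_pos (- t)).
  destruct (L1 (w3 F s t) (exp (- s) * exp (- t))) as [l [Hl Hb]].
  - nra.
  - intros v Hv. assert (Hv' := exp_pos (- v)). destruct (g0 F p G s t v). unfold w3.
    replace (F s t v * exp (- s) * exp (- t) * exp (- v)) with (F s t v * (exp (- s) * exp (- t) * exp (- v))) by ring.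
    assert (0 < exp (- s) * exp (- t) * exp (- v)) by (apply Rmult_lt_0_compat; [nra|lra]).
    split; [nra|]. nra.
  - intros b Hb.
    assert (Hm : forall x z, 0 <= x -> x <= z -> z <= b -> w3 F s t z <= w3 F s t x).
    { intros x z Hx Hxz Hz. unfold w3.
      assert (K1 := gu F p G s t x z Hxz). destruct (g0 F p G s t x). destruct (g0 F p G s t z).
      assert (K2 := exp_anti x z Hxz). assert (exp (- z) > 0) by apply exp_pos.
      assert (0 < exp (- s) * exp (- t)) by nra.
      replace (F s t z * exp (- s) * exp (- t) * exp (- z)) with ((F s t z * (exp (- s) * exp (- t))) * exp (- z)) by ring.
      replace (F s t x * exp (- s) * exp (- t) * exp (- x)) with ((F s t x * (exp (- s) * exp (- t))) * exp (- x)) by ring.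
      apply Rmult_le_compat; [nra|lra|nra|lra]. }
    exists (mono_int _ 0 b Hb Hm). exact I.
  - assert (EqT : Tf F s t = l) by (unfold Tf; apply Int0inf_eq; exact Hl). rewrite EqT; auto.
Qed.

Lemma T_mono_t F p : good F p -> forall s t1 t2, t1 <= t2 -> t1 <> p -> Tf F s t2 <= Tf F s t1.
Proof.
  intros G s t1 t2 H12 Hp.
  apply (L3 (w3 F s t2) (w3 F s t1) _ _ 0); try apply (good_T F p G).
  intros v Hv _. unfold w3.
  assert (H1 := gt F p G s t1 t2 v H12 Hp ltac:(lra)).
  destruct (g0 F p G s t2 v).
  assert (H2 := exp_anti _ _ H12).
  assert (exp (- s) > 0) by apply exp_pos. assert (exp (- v) > 0) by apply exp_pos.
  assert (exp (- t2) > 0) by apply exp_pos.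
  apply Rmult_le_compat_r; [lra|]. apply Rmult_le_compat; try nra.
Qed.

Lemma T_mono_s F p : good F p -> forall s1 s2 t, s1 <= s2 -> Tf F s2 t <= Tf F s1 t.
Proof.
  intros G s1 s2 t H12.
  apply (L3 (w3 F s2 t) (w3 F s1 t) _ _ 0); try apply (good_T F p G).
  intros v Hv _. unfold w3.
  assert (H1 := gs F p G s1 s2 t v H12 ltac:(lra)).
  destruct (g0 F p G s2 t v).
  assert (H2 := exp_anti _ _ H12).
  assert (exp (- t) > 0) by apply exp_pos. assert (exp (- v) > 0) by apply exp_pos.
  assert (exp (- s2) > 0) by apply exp_pos.
  apply Rmult_le_compat_r; [lra|]. apply Rmult_le_compat_r; [lra|].
  apply Rmult_le_compat; lra.
Qed.

Lemma good_S F p : good F p -> forall s,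
  improper_int_to (Tf F s) 0 (Sf F s) /\ 0 <= Sf F s <= exp (- s).
Proof.
  intros G s.
  assert (Hs := exp_pos (- s)).
  destruct (L1 (Tf F s) (exp (- s))) as [l [Hl Hb]].
  - lra.
  - intros v Hv. apply (good_T F p G).
  - intros b Hb. apply (Mp _ 0 b p (exp (- s))); auto.
    + intros x y Hx Hxy Hy Hp. apply (T_mono_t F p G); auto.
    + intros x Hx. destruct (good_T F p G s x) as [_ [_ H]].
      assert (exp (- x) <= 1) by (rewrite <- exp_0; replace 0 with (- 0) by ring; apply exp_anti; lra).
      assert (exp (- x) > 0) by apply exp_pos. nra.
  - assert (EqS : Sf F s = l) by (unfold Sf; apply Int0inf_eq; exact Hl). rewrite EqS; auto.
Qed.

Lemma S_mono F p : good F p -> forall s1 s2, s1 <= s2 -> Sf F s2 <= Sf F s1.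
Proof.
  intros G s1 s2 H12.
  apply (L3 (Tf F s2) (Tf F s1) _ _ 0); try apply (good_S F p G).
  intros v _ _. apply (T_mono_s F p G); auto.
Qed.

Lemma good_E F p : good F p -> improper_int_to (Sf F) 0 (Exp3 F).
Proof.
  intros G.
  destruct (L1 (Sf F) 1) as [l [Hl Hb]].
  - lra.
  - intros v Hv. rewrite Rmult_1_l. apply (good_S F p G).
  - intros b Hb.
    assert (Hm : forall x z, 0 <= x -> x <= z -> z <= b -> Sf F z <= Sf F x)
      by (intros x z Hx Hxz Hz; apply (S_mono F p G); exact Hxz).
    exists (mono_int _ 0 b Hb Hm). exact I.
  - change (Exp3 F) with (Int0inf (Sf F)). rewrite (Int0inf_eq _ _ Hl). auto.
Qed.

Lemma Exp3_le F G p q : good F p -> good G q ->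
  (forall s t u, 0 < t -> t <> q -> 0 <= u -> F s t u <= G s t u) -> Exp3 F <= Exp3 G.
Proof.
  intros HF HG Hle.
  apply (L3 (Sf F) (Sf G) _ _ 0 (good_E F p HF) (good_E G q HG)).
  intros s _ _.
  apply (L3 (Tf F s) (Tf G s) _ _ q (proj1 (good_S F p HF s)) (proj1 (good_S G q HG s))).
  intros t Ht Htq.
  apply (L3 (w3 F s t) (w3 G s t) _ _ 0 (proj1 (good_T F p HF s t)) (proj1 (good_T G q HG s t))).
  intros u Hu _. unfold w3.
  assert (exp (- t) > 0) by apply exp_pos. assert (exp (- u) > 0) by apply exp_pos.
  assert (exp (- s) > 0) by apply exp_pos.
  apply Rmult_le_compat_r; [lra|]. apply Rmult_le_compat_r; [lra|].
  apply Rmult_le_compat_r; [lra|]. apply Hle; lra.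
Qed.

Lemma Exp3_split G H K p q : good G p -> good H q ->
  (forall s t u, G s t u = K s t u + H s t u) -> Exp3 K + Exp3 H = Exp3 G.
Proof.
  intros HG HH Heq.
  assert (ET : forall s t, Tf K s t = Tf G s t - Tf H s t).
  { intros s t. unfold Tf at 1. apply Int0inf_eq.
    replace (Tf G s t - Tf H s t) with (Tf G s t + (-1) * Tf H s t) by ring.
    apply (Lin (w3 G s t) (w3 H s t) _ _ _ _ (proj1 (good_T G p HG s t)) (proj1 (good_T H q HH s t))).
    intros v _. unfold w3. rewrite Heq. ring. }
  assert (ES : forall s, Sf K s = Sf G s - Sf H s).
  { intros s. unfold Sf at 1. apply Int0inf_eq.
    replace (Sf G s - Sf H s) with (Sf G s + (-1) * Sf H s) by ring.
    apply (Lin (Tf G s) (Tf H s) _ _ _ _ (proj1 (good_S G p HG s)) (proj1 (good_S H q HH s))).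
    intros v _. rewrite ET. ring. }
  assert (EE : Exp3 K = Exp3 G - Exp3 H).
  { change (Exp3 K) with (Int0inf (Sf K)). apply Int0inf_eq.
    replace (Exp3 G - Exp3 H) with (Exp3 G + (-1) * Exp3 H) by ring.
    apply (Lin (Sf G) (Sf H) _ _ _ _ (good_E G p HG) (good_E H q HH)).
    intros v _. rewrite ES. ring. }
  lra.
Qed.

Definition Gc a eta e s x u :=
  ind_lt (s / a + eta * (u / a) * (x - e)) e * ind_lt e x + ind_lt (s / a) e * ind_lt x e.
Definition Gf a eta e c := fun s t u => Gc a eta e s (t / c) u.
Definition F2f a e c := fun s t u : R => ind_lt (s / a) e * ind_lt (t / c) e.

Lemma Gc_x a eta e s x1 x2 u : 0 < a -> 0 < eta -> x1 <= x2 -> x1 <> e -> 0 <= u ->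
  Gc a eta e s x2 u <= Gc a eta e s x1 u.
Proof.
  intros Ha He H12 Hne Hu.
  assert (Hk : 0 <= eta * (u / a)) by (apply Rmult_le_pos; [lra|apply Rdiv_le_0_compat; lra]).
  unfold Gc, ind_lt. set (k := eta * (u / a)) in *.
  repeat destruct Rlt_dec; nra.
Qed.

Lemma Gc_s a eta e s1 s2 x u : 0 < a -> s1 <= s2 ->
  Gc a eta e s2 x u <= Gc a eta e s1 x u.
Proof.
  intros Ha H12.
  assert (s1 / a <= s2 / a) by (apply Rmult_le_compat_r; [left; apply Rinv_0_lt_compat; lra|lra]).
  unfold Gc, ind_lt. repeat destruct Rlt_dec; lra.
Qed.

Lemma Gc_u a eta e s x u1 u2 : 0 < a -> 0 < eta -> u1 <= u2 ->
  Gc a eta e s x u2 <= Gc a eta e s x u1.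
Proof.
  intros Ha He H12.
  assert (Hz : 0 < eta / a) by (apply Rdiv_lt_0_compat; lra).
  unfold Gc, ind_lt.
  replace (eta * (u1 / a)) with (eta / a * u1) by (field; lra).
  replace (eta * (u2 / a)) with (eta / a * u2) by (field; lra).
  set (z := eta / a) in *.
  destruct (Rlt_dec e x) as [Hx|Hx]; cbv iota beta.
  - assert (z * u1 * (x - e) <= z * u2 * (x - e)).
    { apply Rmult_le_compat_r; [lra|]. apply Rmult_le_compat_l; lra. }
    repeat destruct Rlt_dec; lra.
  - repeat destruct Rlt_dec; lra.
Qed.

Lemma Gc_01 a eta e s x u : 0 <= Gc a eta e s x u <= 1.
Proof. unfold Gc, ind_lt. repeat destruct Rlt_dec; lra. Qed.

Lemma div_le t c1 c2 : 0 <= t -> 0 < c1 <= c2 -> t / c2 <= t / c1.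
Proof.
  intros Ht Hc. unfold Rdiv. apply Rmult_le_compat_l; auto.
  apply Rinv_le_contravar; lra.
Qed.

Lemma Gf_good a eta e c : 0 < a -> 0 < eta -> 0 < c -> good (Gf a eta e c) (c * e).
Proof.
  intros Ha He Hc. constructor; unfold Gf.
  - intros; apply Gc_01.
  - intros; apply Gc_u; auto.
  - intros; apply Gc_s; auto.
  - intros s t1 t2 u H12 Hp Hu. apply Gc_x; auto.
    + apply Rmult_le_compat_r; [left; apply Rinv_0_lt_compat; lra|lra].
    + intros Heq. apply Hp. rewrite <- Heq. field. lra.
Qed.

Lemma F2f_good a e c : 0 < a -> 0 < c -> good (F2f a e c) 0.
Proof.
  intros Ha Hc. unfold F2f. constructor.
  - intros; unfold ind_lt; repeat destruct Rlt_dec; lra.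
  - intros; lra.
  - intros s1 s2 t u H12 _.
    assert (s1 / a <= s2 / a) by (apply Rmult_le_compat_r; [left; apply Rinv_0_lt_compat; lra|lra]).
    unfold ind_lt; repeat destruct Rlt_dec; lra.
  - intros s t1 t2 u H12 _ _.
    assert (t1 / c <= t2 / c) by (apply Rmult_le_compat_r; [left; apply Rinv_0_lt_compat; lra|lra]).
    unfold ind_lt; repeat destruct Rlt_dec; lra.
Qed.

Lemma outage_eq d eta Rt P r : 0 < eta ->
  outage d eta Rt P r = Exp3 (Gf (1 + d ^ 2) eta (eps Rt P) (1 + r ^ 2)).
Proof.
  intros He.
  assert (Ha : 0 < 1 + d ^ 2) by (assert (0 <= d ^ 2) by (rewrite <- Rsqr_pow2; apply Rle_0_sqr); lra).
  assert (Hc : 0 < 1 + r ^ 2) by (assert (0 <= r ^ 2) by (rewrite <- Rsqr_pow2; apply Rle_0_sqr); lra).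
  unfold outage. cbv zeta.
  apply (Exp3_split _ _ _ _ _ (Gf_good _ eta (eps Rt P) _ Ha He Hc) (F2f_good _ (eps Rt P) _ Ha Hc)).
  intros s t u. reflexivity.
Qed.

Theorem proposition1 (N : nat) (ds : nat -> R) (RD d eta Rt : R) :
  (1 <= N)%nat ->
  0 < d -> 0 < eta <= 1 -> 0 < Rt ->
  (forall i, (i < N)%nat -> 0 <= ds i <= RD) ->
  exists P0 : R, forall P : R, P0 < P ->
    forall j, (j < N)%nat -> (forall k, (k < N)%nat -> ds j <= ds k) ->
    forall i, (i < N)%nat ->
      outage d eta Rt P (ds j) <= outage d eta Rt P (ds i).
Proof.
  intros HN Hd Heta HRt Hds.
  exists 0. intros P HP j Hj Hmin i Hi.
  rewrite !outage_eq by lra.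
  assert (Ha : 0 < 1 + d ^ 2) by (assert (0 <= d ^ 2) by (rewrite <- Rsqr_pow2; apply Rle_0_sqr); lra).
  assert (Hj0 := proj1 (Hds j Hj)).
  assert (Hji := Hmin i Hi).
  assert (Hcj : 0 < 1 + ds j ^ 2) by (assert (H2 := pow2_ge_0 (ds j)); lra).
  assert (Hci : 1 + ds j ^ 2 <= 1 + ds i ^ 2) by (apply Rplus_le_compat_l; apply pow_incr; lra).
  assert (Hci0 : 0 < 1 + ds i ^ 2) by lra.
  apply (Exp3_le _ _ _ _ (Gf_good _ eta (eps Rt P) _ Ha (proj1 Heta) Hcj)
                         (Gf_good _ eta (eps Rt P) _ Ha (proj1 Heta) Hci0)).
  intros s t u Ht Htq Hu. unfold Gf.
  apply Gc_x; auto; try lra.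
  - apply div_le; lra.
  - intros Heq. apply Htq. rewrite <- Heq. field. lra.
Qed.
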